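(* Let $\tau\in\mathbb R$ and let $(\vartheta(s),\omega(s))$, $s\in J$ ($J$ an interval containing $0$), be a $C^1$ solution with $\vartheta(s)\in(-\pi/2,\pi/2)$ of Hamilton's equations for $H(\vartheta,\omega)=\frac12(\omega^2+\tau^2\tan^2\vartheta)$, namely $\dot\vartheta=\omega$, $\dot\omega=-\tau^2\tan\vartheta/\cos^2\vartheta$, with $\vartheta(0)=0$. Let $E\ge0$ be defined by $E^2=2H(\vartheta(s),\omega(s))$ (a constant along the solution), assume $E^2+\tau^2>0$ and set $\Omega=\sqrt{E^2+\tau^2}$. Then $\sin^2\vartheta(s)=\frac{E^2}{\Omega^2}\sin^2(\Omega s)$ for all $s\in J$. *)

(* Defs.v *)
From Stdlib Require Import Reals.
From Coquelicot Require Import Coquelicot.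
Open Scope R_scope.

Definition is_interval (J : R -> Prop) : Prop :=
  forall a b x, J a -> J b -> a <= x <= b -> J x.

(* f has derivative f' at every point of J, relative to J
   (one-sided at endpoints belonging to J). *)
Definition has_deriv_on (J : R -> Prop) (f f' : R -> R) : Prop :=
  forall s, J s ->
    filterlim (fun h => (f (s + h) - f s) / h)
      (within (fun h => h <> 0 /\ J (s + h)) (locally 0))
      (locally (f' s)).

Definition continuous_on_set (J : R -> Prop) (f : R -> R) : Prop :=
  forall s, J s -> filterlim f (within J (locally s)) (locally (f s)).

(* Main.v *)
Require Import Defs.
From Stdlib Require Import Reals Lra.
From Coquelicot Require Import Coquelicot.
Open Scope R_scope.

Lemma deriv_eps (J : R -> Prop) f f' s :
  has_deriv_on J f f' -> J s ->
  forall eps, 0 < eps -> exists del, 0 < del /\ forall h, Rabs h < del -> h <> 0 -> J (s + h) ->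
     Rabs ((f (s + h) - f s) / h - f' s) < eps.
Proof.
  intros Hd Js eps Heps.
  specialize (Hd s Js (ball (f' s) eps) (locally_ball _ (mkposreal eps Heps))).
  destruct Hd as [del Hdel].
  exists (pos del); split; [apply cond_pos|].
  intros h Hh Hh0 HJ. apply (Hdel h); [|split; auto].
  unfold ball; simpl; unfold AbsRing_ball, abs, minus, plus, opp; simpl.
  rewrite Ropp_0, Rplus_0_r. exact Hh.
Qed.

Lemma deriv_interior (J : R -> Prop) f f' s del :
  has_deriv_on J f f' -> J s -> 0 < del -> (forall y, Rabs (y - s) < del -> J y) ->
  is_derive f s (f' s).
Proof.
  intros Hd Js Hdel Hb. apply is_derive_Reals.
  intros eps Heps. destruct (deriv_eps J f f' s Hd Js eps Heps) as [d1 [Hd1 H1]].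
  exists (mkposreal (Rmin d1 del) (Rmin_pos _ _ Hd1 Hdel)). simpl.
  intros h Hh0 Hh. apply H1; auto.
  - apply Rlt_le_trans with (1 := Hh); apply Rmin_l.
  - apply Hb. replace (s + h - s) with h by ring.
    apply Rlt_le_trans with (1 := Hh); apply Rmin_r.
Qed.

Lemma deriv_cont (J : R -> Prop) f f' s :
  has_deriv_on J f f' -> J s ->
  forall eps, 0 < eps -> exists del, 0 < del /\ forall y, J y -> Rabs (y - s) < del ->
     Rabs (f y - f s) < eps.
Proof.
  intros Hd Js eps Heps.
  destruct (deriv_eps J f f' s Hd Js 1 Rlt_0_1) as [d1 [Hd1 H1]].
  assert (Hp : 0 < Rabs (f' s) + 1) by (generalize (Rabs_pos (f' s)); lra).
  exists (Rmin d1 (eps / (Rabs (f' s) + 1))). split.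
  { apply Rmin_pos; auto. apply Rdiv_lt_0_compat; auto. }
  intros y Jy Hy.
  destruct (Req_dec y s) as [->|Hne].
  { unfold Rminus; rewrite Rplus_opp_r, Rabs_R0; auto. }
  set (h := y - s).
  assert (Hh0 : h <> 0) by (unfold h; lra).
  assert (Hys : y = s + h) by (unfold h; ring).
  specialize (H1 h). rewrite <- Hys in H1.
  assert (Hlt : Rabs h < d1) by (apply Rlt_le_trans with (1 := Hy); apply Rmin_l).
  specialize (H1 Hlt Hh0 Jy).
  assert (E1 : f y - f s = h * ((f y - f s) / h - f' s) + h * f' s) by (field; auto).
  rewrite E1.
  apply Rle_lt_trans with (Rabs h * (Rabs (f' s) + 1)).
  { eapply Rle_trans; [apply Rabs_triang|]. rewrite !Rabs_mult.
    assert (0 <= Rabs h) by apply Rabs_pos.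
    assert (Rabs h * Rabs ((f y - f s) / h - f' s) <= Rabs h * 1).
    { apply Rmult_le_compat_l; lra. }
    lra. }
  assert (Rabs h < eps / (Rabs (f' s) + 1)) by
    (apply Rlt_le_trans with (1 := Hy); apply Rmin_r).
  apply (Rmult_lt_compat_r (Rabs (f' s) + 1)) in H; auto.
  unfold Rdiv in H. rewrite Rmult_assoc, Rinv_l, Rmult_1_r in H; lra.
Qed.

Lemma const_on (J : R -> Prop) (G : R -> R) :
  is_interval J ->
  (forall s del, J s -> 0 < del -> (forall y, Rabs (y - s) < del -> J y) -> is_derive G s 0) ->
  (forall s, J s -> forall eps, 0 < eps -> exists del, 0 < del /\ forall y, J y ->
      Rabs (y - s) < del -> Rabs (G y - G s) < eps) ->
  forall a b, J a -> J b -> a < b -> G a = G b.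
Proof.
  intros hJ Hd Hc a b Ja Jb Hab.
  assert (Hint : forall x y, a < x -> x < y -> y < b -> G x = G y).
  { intros x y Hx Hxy Hy.
    assert (Hder : forall z, x <= z <= y -> is_derive G z 0).
    { intros z Hz. apply (Hd z (Rmin (z - a) (b - z))).
      - apply (hJ a b); auto; lra.
      - apply Rmin_pos; lra.
      - intros w Hw. apply (hJ a b); auto.
        assert (Rabs (w - z) < z - a) by (apply Rlt_le_trans with (1 := Hw); apply Rmin_l).
        assert (Rabs (w - z) < b - z) by (apply Rlt_le_trans with (1 := Hw); apply Rmin_r).
        apply Rabs_def2 in H; apply Rabs_def2 in H0. lra. }
    destruct (MVT_gen G x y (fun _ => 0)) as [c [_ Hc']].
    - intros z Hz. apply Hder. rewrite Rmin_left, Rmax_right in Hz by lra. lra.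
    - intros z Hz. rewrite Rmin_left, Rmax_right in Hz by lra.
      apply continuity_pt_filterlim.
      apply (ex_derive_continuous (K := R_AbsRing) (V := R_NormedModule) G z).
      eexists; apply Hder; lra.
    - lra. }
  assert (Hint2 : forall x y, a < x < b -> a < y < b -> G x = G y).
  { intros x y Hx Hy. destruct (Rtotal_order x y) as [H|[H|H]].
    - apply Hint; lra.
    - subst; auto.
    - symmetry; apply Hint; lra. }
  assert (Hclose : forall u v, (forall eps, 0 < eps -> Rabs (u - v) < eps) -> u = v).
  { intros u v H. destruct (Req_dec u v) as [|Hne]; auto.
    assert (0 < Rabs (u - v)) by (apply Rabs_pos_lt; lra).
    specialize (H _ H0); lra. }
  set (m := (a + b) / 2).
  assert (Ha : G a = G m).
  { apply Hclose; intros eps Heps.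
    destruct (Hc a Ja eps Heps) as [d [Hd0 Hd1]].
    set (y := a + Rmin d ((b - a)/2) / 2).
    assert (0 < Rmin d ((b - a)/2)) by (apply Rmin_pos; lra).
    assert (Rmin d ((b - a)/2) <= (b-a)/2) by apply Rmin_r.
    assert (Rmin d ((b - a)/2) <= d) by apply Rmin_l.
    assert (Hy : a < y < b) by (unfold y; lra).
    rewrite <- (Hint2 y m Hy) by (unfold m; lra).
    rewrite Rabs_minus_sym. apply Hd1.
    - apply (hJ a b); auto; lra.
    - unfold y. rewrite Rabs_right; lra. }
  assert (Hb : G b = G m).
  { apply Hclose; intros eps Heps.
    destruct (Hc b Jb eps Heps) as [d [Hd0 Hd1]].
    set (y := b - Rmin d ((b - a)/2) / 2).
    assert (0 < Rmin d ((b - a)/2)) by (apply Rmin_pos; lra).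
    assert (Rmin d ((b - a)/2) <= (b-a)/2) by apply Rmin_r.
    assert (Rmin d ((b - a)/2) <= d) by apply Rmin_l.
    assert (Hy : a < y < b) by (unfold y; lra).
    rewrite <- (Hint2 y m Hy) by (unfold m; lra).
    rewrite Rabs_minus_sym. apply Hd1.
    - apply (hJ a b); auto; lra.
    - unfold y. rewrite Rabs_left; lra. }
  congruence.
Qed.

Section Lims.
Context {T : Type} (F : (T -> Prop) -> Prop) {FF : Filter F}.

Lemma lim_plus (f g : T -> R) a b : filterlim f F (locally a) -> filterlim g F (locally b) ->
  filterlim (fun x => f x + g x) F (locally (a + b)).
Proof. intros Hf Hg. eapply filterlim_comp_2; [exact Hf|exact Hg|]. apply (filterlim_plus a b). Qed.

Lemma lim_mult (f g : T -> R) a b : filterlim f F (locally a) -> filterlim g F (locally b) ->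
  filterlim (fun x => f x * g x) F (locally (a * b)).
Proof. intros Hf Hg. eapply filterlim_comp_2; [exact Hf|exact Hg|]. apply (filterlim_mult a b). Qed.

Lemma lim_opp (f : T -> R) a : filterlim f F (locally a) ->
  filterlim (fun x => - f x) F (locally (- a)).
Proof. intros Hf. eapply filterlim_comp; [exact Hf|]. apply (filterlim_opp a). Qed.

Lemma lim_minus (f g : T -> R) a b : filterlim f F (locally a) -> filterlim g F (locally b) ->
  filterlim (fun x => f x - g x) F (locally (a - b)).
Proof. intros Hf Hg. apply lim_plus; auto. apply lim_opp; auto. Qed.

Lemma lim_const (c : R) : filterlim (fun _ => c) F (locally c).
Proof. apply filterlim_const. Qed.

Lemma lim_comp (g : R -> R) (f : T -> R) a : (forall x, continuity_pt g x) ->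
  filterlim f F (locally a) -> filterlim (fun x => g (f x)) F (locally (g a)).
Proof. intros Hg Hf. eapply filterlim_comp; [exact Hf|]. apply continuity_pt_filterlim, Hg. Qed.
End Lims.

Lemma ed_to_lim (J : R -> Prop) f s :
  (forall eps, 0 < eps -> exists del, 0 < del /\ forall y, J y -> Rabs (y - s) < del ->
     Rabs (f y - f s) < eps) -> filterlim f (within J (locally s)) (locally (f s)).
Proof.
  intros H P [eps HP]. destruct (H eps (cond_pos eps)) as [d [Hd Hd1]].
  exists (mkposreal d Hd). intros y Hy Jy. apply HP. apply Hd1; auto.
Qed.

Lemma lim_to_ed (J : R -> Prop) f s :
  filterlim f (within J (locally s)) (locally (f s)) ->
  (forall eps, 0 < eps -> exists del, 0 < del /\ forall y, J y -> Rabs (y - s) < del ->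
     Rabs (f y - f s) < eps).
Proof.
  intros H eps Heps.
  destruct (H (ball (f s) eps) (locally_ball _ (mkposreal eps Heps))) as [d Hd].
  exists (pos d); split; [apply cond_pos|]. intros y Jy Hy. apply (Hd y Hy Jy).
Qed.

Lemma lim_id (J : R -> Prop) s : filterlim (fun y => y) (within J (locally s)) (locally s).
Proof. apply ed_to_lim. intros eps Heps; exists eps; split; auto. Qed.

Lemma lim_pow2 {T} (F : (T -> Prop) -> Prop) {FF : Filter F} (f : T -> R) a :
  filterlim f F (locally a) -> filterlim (fun x => f x ^ 2) F (locally (a ^ 2)).
Proof.
  intros H. apply (lim_comp F (fun x => x ^ 2)); auto.
  intros x. apply derivable_continuous_pt. apply derivable_pt_pow.
Qed.

Lemma lim_div {T} (F : (T -> Prop) -> Prop) {FF : Filter F} (f g : T -> R) a b :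
  b <> 0 -> filterlim f F (locally a) -> filterlim g F (locally b) ->
  filterlim (fun x => f x / g x) F (locally (a / b)).
Proof.
  intros Hb Hf Hg. apply lim_mult; auto.
  eapply filterlim_comp; [exact Hg|]. apply continuity_pt_filterlim.
  apply (continuity_pt_inv (fun x => x)); auto. apply continuity_pt_id.
Qed.

Lemma const_on2 (J : R -> Prop) (G : R -> R) :
  is_interval J ->
  (forall s del, J s -> 0 < del -> (forall y, Rabs (y - s) < del -> J y) -> is_derive G s 0) ->
  (forall s, J s -> filterlim G (within J (locally s)) (locally (G s))) ->
  forall a b, J a -> J b -> G a = G b.
Proof.
  intros hJ Hd Hc a b Ja Jb.
  assert (Hc' : forall s, J s -> forall eps, 0 < eps -> exists del, 0 < del /\ forall y, J y ->
      Rabs (y - s) < del -> Rabs (G y - G s) < eps).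
  { intros s Js; apply lim_to_ed; auto. }
  destruct (Rtotal_order a b) as [H|[H|H]].
  - apply (const_on J G); auto.
  - subst; auto.
  - symmetry; apply (const_on J G); auto.
Qed.

Theorem lemma4p12 (tau : R) (J : R -> Prop) (theta omega : R -> R) (E : R)
  (hJ : is_interval J) (hJ0 : J 0)
  (hrange : forall s, J s -> - (PI / 2) < theta s < PI / 2)
  (htheta : has_deriv_on J theta omega)
  (homega : has_deriv_on J omega
              (fun s => - (tau ^ 2) * tan (theta s) / (cos (theta s)) ^ 2))
  (hC1 : continuous_on_set J omega /\
         continuous_on_set J (fun s => - (tau ^ 2) * tan (theta s) / (cos (theta s)) ^ 2))
  (h0 : theta 0 = 0)
  (hE : 0 <= E)
  (hEdef : E ^ 2 = omega 0 ^ 2 + tau ^ 2 * (tan (theta 0)) ^ 2)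
  (hpos : E ^ 2 + tau ^ 2 > 0) :
  forall s, J s ->
    (sin (theta s)) ^ 2 =
      E ^ 2 / (sqrt (E ^ 2 + tau ^ 2)) ^ 2 * (sin (sqrt (E ^ 2 + tau ^ 2) * s)) ^ 2.
Proof.
  assert (Hcos : forall s, J s -> 0 < cos (theta s)).
  { intros s Js; destruct (hrange s Js); apply cos_gt_0; auto. }
  assert (Dth : forall s del, J s -> 0 < del -> (forall y, Rabs (y - s) < del -> J y) ->
            is_derive theta s (omega s)).
  { intros s del Js Hd Hb. exact (deriv_interior J theta omega s del htheta Js Hd Hb). }
  assert (Dom : forall s del, J s -> 0 < del -> (forall y, Rabs (y - s) < del -> J y) ->
            is_derive omega s (- (tau ^ 2) * (sin (theta s) / cos (theta s)) / (cos (theta s)) ^ 2)).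
  { intros s del Js Hd Hb. exact (deriv_interior J omega _ s del homega Js Hd Hb). }
  assert (Lth : forall s, J s -> filterlim theta (within J (locally s)) (locally (theta s))).
  { intros s Js. apply ed_to_lim. exact (deriv_cont J theta omega s htheta Js). }
  assert (Lom : forall s, J s -> filterlim omega (within J (locally s)) (locally (omega s))).
  { intros s Js. apply ed_to_lim. exact (deriv_cont J omega _ s homega Js). }
  rewrite h0, tan_0 in hEdef.
  set (w0 := omega 0) in *.
  set (K := fun s => omega s ^ 2 + tau ^ 2 * (sin (theta s) / cos (theta s)) ^ 2).
  assert (HK : forall s, J s -> K s = E ^ 2).
  { intros s Js. replace (E ^ 2) with (K 0).
    2:{ unfold K; rewrite h0, sin_0, cos_0. unfold w0 in hEdef; rewrite hEdef; field. }
    apply (const_on2 J K hJ); auto.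
    - intros x del Jx Hd Hb. specialize (Dth x del Jx Hd Hb). specialize (Dom x del Jx Hd Hb).
      specialize (Hcos x Jx).
      unfold K. auto_derive.
      + repeat split; try (eexists; eassumption). lra.
      + replace (Derive (fun x0 => theta x0) x) with (omega x)
          by (symmetry; apply is_derive_unique; auto).
        replace (Derive (fun x0 => omega x0) x) with
          (- (tau ^ 2) * (sin (theta x) / cos (theta x)) / (cos (theta x)) ^ 2)
          by (symmetry; apply is_derive_unique; auto).
        assert (Hp : sin (theta x) ^ 2 + cos (theta x) ^ 2 = 1)
          by (rewrite <- (sin2_cos2 (theta x)); unfold Rsqr; ring).
        transitivity (2 * tau ^ 2 * omega x * sin (theta x) *
           (sin (theta x) ^ 2 + cos (theta x) ^ 2 - 1) / cos (theta x) ^ 3).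
        { field. lra. }
        rewrite Hp. field. lra.
    - intros x Jx. unfold K. specialize (Hcos x Jx).
      apply lim_plus; try typeclasses eauto. apply lim_pow2; try typeclasses eauto. auto.
      apply lim_mult; try typeclasses eauto. apply lim_const; try typeclasses eauto.
      apply lim_pow2; try typeclasses eauto. apply lim_div; try typeclasses eauto. lra.
      apply lim_comp; try typeclasses eauto; auto. apply continuity_sin.
      apply lim_comp; try typeclasses eauto; auto. apply continuity_cos. }
  assert (HE2 : E ^ 2 = w0 ^ 2) by (rewrite hEdef; ring).
  set (Om := sqrt (E ^ 2 + tau ^ 2)).
  assert (HOm : Om * Om = E ^ 2 + tau ^ 2) by (apply sqrt_sqrt; lra).
  assert (HOm0 : 0 < Om) by (apply sqrt_lt_R0; lra).
  set (G := fun s => (Om * sin (theta s) - w0 * sin (Om * s)) ^ 2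
                     + (cos (theta s) * omega s - w0 * cos (Om * s)) ^ 2).
  assert (HG : forall s, J s -> G s = 0).
  { intros s Js. replace 0 with (G 0).
    2:{ unfold G; rewrite h0, Rmult_0_r, sin_0, cos_0. unfold w0; ring. }
    apply (const_on2 J G hJ); auto.
    - intros x del Jx Hd Hb. specialize (Dth x del Jx Hd Hb). specialize (Dom x del Jx Hd Hb).
      specialize (Hcos x Jx). specialize (HK x Jx). unfold K in HK.
      unfold G. auto_derive.
      + repeat split; try (eexists; eassumption).
      + replace (Derive (fun x0 => theta x0) x) with (omega x)
          by (symmetry; apply is_derive_unique; auto).
        replace (Derive (fun x0 => omega x0) x) with
          (- (tau ^ 2) * (sin (theta x) / cos (theta x)) / (cos (theta x)) ^ 2)
          by (symmetry; apply is_derive_unique; auto).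
        assert (Hp : sin (theta x) ^ 2 + cos (theta x) ^ 2 = 1)
          by (rewrite <- (sin2_cos2 (theta x)); unfold Rsqr; ring).
        assert (Hk : Om * Om - omega x ^ 2 - tau ^ 2 / cos (theta x) ^ 2 = 0).
        { rewrite HOm. replace (omega x ^ 2) with
            (E ^ 2 - tau ^ 2 * (sin (theta x) / cos (theta x)) ^ 2) by lra.
          transitivity (tau ^ 2 * (sin (theta x) ^ 2 + cos (theta x) ^ 2 - 1) / cos (theta x) ^ 2).
          { field. lra. }
          rewrite Hp. field. lra. }
        transitivity (2 * (cos (theta x) * omega x - w0 * cos (Om * x)) * sin (theta x) *
           (Om * Om - omega x ^ 2 - tau ^ 2 / cos (theta x) ^ 2)).
        { field. lra. }
        rewrite Hk. ring.
    - intros x Jx. unfold G. specialize (Hcos x Jx).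
      repeat first [ typeclasses eauto | apply lim_minus | apply lim_plus | apply lim_pow2
                   | apply lim_const | apply lim_id | apply lim_mult | apply Lth | apply Lom
                   | apply continuity_sin | apply continuity_cos
                   | apply lim_comp ]; auto. }
  intros s Js. specialize (HG s Js). unfold G in HG.
  assert (HU : Om * sin (theta s) - w0 * sin (Om * s) = 0).
  { apply Rsqr_0_uniq. unfold Rsqr.
    generalize (pow2_ge_0 (Om * sin (theta s) - w0 * sin (Om * s))).
    generalize (pow2_ge_0 (cos (theta s) * omega s - w0 * cos (Om * s))). intros. nra. }
  assert (Hs : sin (theta s) = w0 * sin (Om * s) / Om).
  { apply (Rmult_eq_reg_l Om); [|lra].
    replace (Om * (w0 * sin (Om * s) / Om)) with (w0 * sin (Om * s)) by (field; lra). lra. }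
  rewrite Hs.
  rewrite HE2. field. lra.
Qed.
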